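(* The polycyclic monoid on two generators, $P_2=\mathrm{Mon}^0\langle p,q,p^{-1},q^{-1}\mid pp^{-1}=1=qq^{-1},\ pq^{-1}=0=qp^{-1}\rangle$ (monoid with zero), is neither left fairly amenable nor right fairly amenable.
   Context: $\mathrm{Mon}^0\langle\cdot\mid\cdot\rangle$ denotes the monoid with zero $0$ given by the presentation. For a semigroup $U$, $s\in U$, $A\subseteq U$: $s$ acts injectively on the left (right) of $A$ if $x\mapsto sx$ ($x\mapsto xs$) is injective on $A$. A finitely-additive probability measure on $U$ is $\mu:\mathcal P(U)\to[0,1]$ with $\mu(U)=1$, additive on disjoint sets; it is left fairly invariant if $\mu(sA)=\mu(A)$ whenever $s$ acts injectively on the left of $A$ (right fairly invariant analogously with $As$). $U$ is left (right) fairly amenable if such a measure exists. *)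

(* Defs.v *)
From Stdlib Require Import Reals List.
Import ListNotations.
Open Scope R_scope.

Definition set_union {U : Type} (A B : U -> Prop) : U -> Prop := fun x => A x \/ B x.
Definition set_disjoint {U : Type} (A B : U -> Prop) : Prop := forall x, A x -> B x -> False.
Definition set_full {U : Type} : U -> Prop := fun _ => True.
Definition set_image {U : Type} (f : U -> U) (A : U -> Prop) : U -> Prop :=
  fun y => exists x, A x /\ y = f x.

Definition fa_prob_measure {U : Type} (mu : (U -> Prop) -> R) : Prop :=
  (forall A, 0 <= mu A <= 1) /\
  mu set_full = 1 /\
  (forall A B, set_disjoint A B -> mu (set_union A B) = mu A + mu B).

Definition acts_inj_left {U : Type} (mul : U -> U -> U) (s : U) (A : U -> Prop) : Prop :=
  forall x y, A x -> A y -> mul s x = mul s y -> x = y.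
Definition acts_inj_right {U : Type} (mul : U -> U -> U) (s : U) (A : U -> Prop) : Prop :=
  forall x y, A x -> A y -> mul x s = mul y s -> x = y.

Definition left_fairly_invariant {U : Type} (mul : U -> U -> U) (mu : (U -> Prop) -> R) : Prop :=
  forall s A, acts_inj_left mul s A -> mu (set_image (fun x => mul s x) A) = mu A.
Definition right_fairly_invariant {U : Type} (mul : U -> U -> U) (mu : (U -> Prop) -> R) : Prop :=
  forall s A, acts_inj_right mul s A -> mu (set_image (fun x => mul x s) A) = mu A.

Definition left_fairly_amenable {U : Type} (mul : U -> U -> U) : Prop :=
  exists mu, fa_prob_measure mu /\ left_fairly_invariant mul mu.
Definition right_fairly_amenable {U : Type} (mul : U -> U -> U) : Prop :=
  exists mu, fa_prob_measure mu /\ right_fairly_invariant mul mu.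

(* ---------- The polycyclic monoid P_2 (concrete normal-form model) ----------
   Positive words over {p,q} are lists of bool (false = p, true = q).
   Every nonzero element of P_2 has a unique normal form a^{-1} b with a, b
   positive words; it is represented by Some (a, b).  None is the zero 0. *)
Definition P2 : Type := option (list bool * list bool).

Fixpoint strip_prefix (c w : list bool) : option (list bool) :=
  match c, w with
  | [], _ => Some w
  | x :: c', y :: w' => if Bool.eqb x y then strip_prefix c' w' else None
  | _ :: _, [] => None
  end.

(* (a^{-1} b)(c^{-1} d):  if b = b' c then a^{-1} b' d;
   if c = c' b then (c' a)^{-1} d;  otherwise 0. *)
Definition P2mul (x y : P2) : P2 :=
  match x, y with
  | Some (a, b), Some (c, d) =>
      match strip_prefix (rev c) (rev b) with
      | Some r => Some (a, rev r ++ d)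
      | None =>
          match strip_prefix (rev b) (rev c) with
          | Some r => Some (rev r ++ a, d)
          | None => None
          end
      end
  | _, _ => None
  end.

Definition P2one : P2 := Some ([], []).
Definition P2zero : P2 := None.
Definition P2p : P2 := Some ([], [false]).
Definition P2q : P2 := Some ([], [true]).
Definition P2pinv : P2 := Some ([false], []).
Definition P2qinv : P2 := Some ([true], []).

Example P2_rel1 : P2mul P2p P2pinv = P2one. Proof. reflexivity. Qed.
Example P2_rel2 : P2mul P2q P2qinv = P2one. Proof. reflexivity. Qed.
Example P2_rel3 : P2mul P2p P2qinv = P2zero. Proof. reflexivity. Qed.
Example P2_rel4 : P2mul P2q P2pinv = P2zero. Proof. reflexivity. Qed.
Example P2_nf : P2mul P2pinv P2q = Some ([false], [true]). Proof. reflexivity. Qed.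

(* Main.v *)
Require Import Defs.
From Stdlib Require Import Reals List Lra FunctionalExtensionality PropExtensionality.
Import ListNotations.
Open Scope R_scope.

Lemma set_ext {U : Type} (A B : U -> Prop) : (forall x, A x <-> B x) -> A = B.
Proof. intro H; apply functional_extensionality; intro x; apply propositional_extensionality; auto. Qed.

Lemma core (mu : (P2 -> Prop) -> R) (IA IB Bs : P2 -> Prop) :
  fa_prob_measure mu ->
  mu (fun x => x = None) = mu (fun x => x = P2one) ->
  mu IA = 1 -> mu IB = 1 -> set_disjoint IA Bs ->
  set_disjoint (fun x => x = None) Bs ->
  IB = set_union (fun x => x = None) Bs -> False.
Proof.
  intros [H01 [Hfull Hadd]] Hz HA HB Hd Hd2 HBe.
  pose proof (Hadd _ _ Hd) as H1.
  pose proof (H01 (set_union IA Bs)) as H2.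
  assert (H3 : mu IB = mu (fun x => x = None) + mu Bs) by (rewrite HBe; apply Hadd; exact Hd2).
  assert (Hd3 : set_disjoint (fun x : P2 => x = None) (fun x => x = P2one)).
  { intros x -> H; discriminate. }
  pose proof (Hadd _ _ Hd3) as H4.
  pose proof (H01 (set_union (fun x : P2 => x = None) (fun x => x = P2one))).
  pose proof (H01 Bs). lra.
Qed.

Lemma zero_single (mu : (P2 -> Prop) -> R) :
  (forall s A, acts_inj_left P2mul s A -> mu (set_image (fun x => P2mul s x) A) = mu A) \/
  (forall s A, acts_inj_right P2mul s A -> mu (set_image (fun x => P2mul x s) A) = mu A) ->
  mu (fun x => x = None) = mu (fun x => x = P2one).
Proof.
  intros [H|H].
  - specialize (H None (fun x => x = P2one)).
    replace (set_image (fun x => P2mul None x) (fun x => x = P2one)) with (fun x : P2 => x = None) in H.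
    + apply H. intros x y -> ->; reflexivity.
    + apply set_ext; intro x; split.
      * intros ->. exists P2one; auto.
      * intros [y [_ ->]]; reflexivity.
  - specialize (H None (fun x => x = P2one)).
    replace (set_image (fun x => P2mul x None) (fun x => x = P2one)) with (fun x : P2 => x = None) in H.
    + apply H. intros x y -> ->; reflexivity.
    + apply set_ext; intro x; split.
      * intros ->. exists P2one; split; reflexivity.
      * intros [y [_ ->]]. destruct y as [[]|]; reflexivity.
Qed.

Lemma left_inv (b : bool) c d :
  P2mul (Some ([b], [])) (Some (c, d)) = Some (c ++ [b], d).
Proof.
  destruct c as [|x c'] using rev_ind.
  - reflexivity.
  - unfold P2mul. rewrite rev_app_distr. simpl.
    rewrite rev_involutive. reflexivity.
Qed.

Lemma right_gen (b : bool) a c :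
  P2mul (Some (a, c)) (Some ([], [b])) = Some (a, c ++ [b]).
Proof. unfold P2mul. simpl. rewrite rev_involutive. reflexivity. Qed.

Lemma not_left : ~ left_fairly_amenable P2mul.
Proof.
  intros [mu [Hm Hi]].
  assert (Hz := zero_single mu (or_introl Hi)).
  assert (inj : forall b, acts_inj_left P2mul (Some ([b], [])) set_full).
  { intros b [[c d]|] [[c' d']|] _ _; rewrite ?left_inv; simpl; try discriminate; auto.
    intro H; injection H; intros; apply app_inj_tail in H1; destruct H1; subst; reflexivity. }
  destruct Hm as [H01 [Hfull Hadd]].
  apply (core mu (set_image (fun x => P2mul (Some ([false], [])) x) set_full)
                 (set_image (fun x => P2mul (Some ([true], [])) x) set_full)
                 (fun x => exists c d, x = Some (c ++ [true], d))); auto.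
  - split; auto.
  - rewrite Hi; auto.
  - rewrite Hi; auto.
  - intros x [[[c d]|] [_ ->]] [c' [d' E]].
    + rewrite left_inv in E. injection E; intros; apply app_inj_tail in H0; destruct H0; discriminate.
    + discriminate.
  - intros x -> [c [d E]]; discriminate.
  - apply set_ext; intro x; split.
    + intros [[[c d]|] [_ ->]].
      * right. rewrite left_inv. eauto.
      * left; reflexivity.
    + intros [->|[c [d ->]]].
      * exists None; split; [exact I|reflexivity].
      * exists (Some (c, d)); split; [exact I|]. rewrite left_inv; reflexivity.
Qed.

Lemma not_right : ~ right_fairly_amenable P2mul.
Proof.
  intros [mu [Hm Hi]].
  assert (Hz := zero_single mu (or_intror Hi)).
  assert (inj : forall b, acts_inj_right P2mul (Some ([], [b])) set_full).
  { intros b [[c d]|] [[c' d']|] _ _; rewrite ?right_gen; simpl; try discriminate; auto.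
    intro H; injection H; intros; apply app_inj_tail in H0; destruct H0; subst; reflexivity. }
  destruct Hm as [H01 [Hfull Hadd]].
  apply (core mu (set_image (fun x => P2mul x (Some ([], [false]))) set_full)
                 (set_image (fun x => P2mul x (Some ([], [true]))) set_full)
                 (fun x => exists c d, x = Some (c, d ++ [true]))); auto.
  - split; auto.
  - rewrite Hi; auto.
  - rewrite Hi; auto.
  - intros x [[[c d]|] [_ ->]] [c' [d' E]].
    + rewrite right_gen in E. injection E; intros; apply app_inj_tail in H; destruct H; discriminate.
    + discriminate.
  - intros x -> [c [d E]]; discriminate.
  - apply set_ext; intro x; split.
    + intros [[[c d]|] [_ ->]].
      * right. rewrite right_gen. eauto.
      * left; reflexivity.
    + intros [->|[c [d ->]]].
      * exists None; split; [exact I|reflexivity].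
      * exists (Some (c, d)); split; [exact I|]. rewrite right_gen; reflexivity.
Qed.

Theorem mainTheorem20 :
  ~ left_fairly_amenable P2mul /\ ~ right_fairly_amenable P2mul.
Proof. split; [exact not_left | exact not_right]. Qed.
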